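(* Let $L\subseteq B_i$ be an SINR-feasible set of links in a bucket $B_i$, let $e\in B_i$, and let $L^\ell=\{e'\in L:d_{e'}\le d_{e'e}\}$. Then $\sum_{e'\in L^\ell}\bar a_{e'}(e)\le C$ for a constant $C$ depending only on $\alpha$ and $\varepsilon$.
   Context: Constants: $\alpha\ge0$, $N>0$, $\beta>0$. Nodes lie in the Euclidean plane. A link is $e=(s_e,r_e,P_e)$; $\mathcal{L}$ is the set of links. $d_e=d(s_e,r_e)$, $d_{e'e}=d(s_{e'},r_e)$, $S_e=P_e/d_e^\alpha$, $S_{e'e}=P_{e'}/d_{e'e}^\alpha$, $\gamma_e=\beta S_e/(S_e-\beta N)$, $\hat a_{e'}(e)=S_{e'e}/S_e$, $a_{e'}(e)=\gamma_e\hat a_{e'}(e)$, $\bar a_{e'}(e)=\min\{1,a_{e'}(e)\}$. $L$ is SINR-feasible if $S_e/(N+\sum_{e'\in L\setminus\{e\}}S_{e'e})\ge\beta$ for all $e\in L$. Buckets: $S_{\min}=\min_{e\in\mathcal{L}}S_e$, $B_i=\{e\in\mathcal{L}:2^iS_{\min}\le S_e<2^{i+1}S_{\min}\}$. Standing assumption: there is a constant $\varepsilon>0$ with $S_e/N\ge(1+\varepsilon)\beta$ for all $e\in\mathcal{L}$. *)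

(* Defs.v *)
From Stdlib Require Import Reals Lra List.
Import ListNotations.
Open Scope R_scope.

Definition point := (R * R)%type.

Definition dist (p q : point) : R :=
  sqrt ((fst p - fst q) ^ 2 + (snd p - snd q) ^ 2).

Record link := mkLink { sdr : point; rcv : point; pw : R }.

Definition link_eq_dec (x y : link) : {x = y} + {x <> y}.
Proof.
  destruct x as [[a b] [c d] p], y as [[a' b'] [c' d'] p'].
  destruct (Req_EM_T a a'); [|right; congruence].
  destruct (Req_EM_T b b'); [|right; congruence].
  destruct (Req_EM_T c c'); [|right; congruence].
  destruct (Req_EM_T d d'); [|right; congruence].
  destruct (Req_EM_T p p'); [|right; congruence].
  left; subst; reflexivity.
Defined.

Definition d_len (e : link) : R := dist (sdr e) (rcv e).
Definition d_cross (e' e : link) : R := dist (sdr e') (rcv e).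

Definition S (alpha : R) (e : link) : R := pw e / Rpower (d_len e) alpha.
Definition Sx (alpha : R) (e' e : link) : R := pw e' / Rpower (d_cross e' e) alpha.

Definition gamma (alpha N beta : R) (e : link) : R :=
  beta * S alpha e / (S alpha e - beta * N).
Definition ahat (alpha : R) (e' e : link) : R := Sx alpha e' e / S alpha e.
Definition a_aff (alpha N beta : R) (e' e : link) : R :=
  gamma alpha N beta e * ahat alpha e' e.
Definition abar (alpha N beta : R) (e' e : link) : R :=
  Rmin 1 (a_aff alpha N beta e' e).

Definition sumR {A} (f : A -> R) (l : list A) : R :=
  fold_right (fun x acc => f x + acc) 0 l.

(* A sender located
   exactly at another link's receiver produces infinite interference, so such
   sets are infeasible; this is made explicit by the positivity clause. *)
Definition sinr_feasible (alpha N beta : R) (L : list link) : Prop :=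
  forall e, In e L ->
    (forall e', In e' L -> e' <> e -> 0 < d_cross e' e) /\
    S alpha e / (N + sumR (fun e' => Sx alpha e' e) (remove link_eq_dec e L)) >= beta.

Definition Smin (alpha : R) (Lall : list link) : R :=
  match Lall with
  | [] => 0
  | h :: t => fold_right Rmin (S alpha h) (map (S alpha) t)
  end.

Definition in_bucket (alpha : R) (Lall : list link) (i : nat) (e : link) : Prop :=
  In e Lall /\
  2 ^ i * Smin alpha Lall <= S alpha e < 2 ^ (Datatypes.S i) * Smin alpha Lall.

Definition L_ell (e : link) (L : list link) : list link :=
  filter (fun e' => if Rle_dec (d_len e') (d_cross e' e) then true else false) L.

(* Main.v *)
Require Import Defs.
From Stdlib Require Import Reals List.
From Stdlib Require Import Lra Psatz.
Open Scope R_scope.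

Lemma sumR_nonneg {A} (f : A -> R) l : (forall x, In x l -> 0 <= f x) -> 0 <= sumR f l.
Proof.
  induction l as [|a l IH]; simpl; intros H; [lra|].
  pose proof (H a (or_introl eq_refl)).
  assert (0 <= sumR f l) by (apply IH; intros; apply H; auto). lra.
Qed.

Lemma sumR_scale {A} (c : R) (f : A -> R) l :
  sumR (fun x => c * f x) l = c * sumR f l.
Proof. induction l; simpl; [ring| rewrite IHl; ring]. Qed.

Lemma sumR_remove_filter {A} (f g : A -> R) (p : A -> bool) dec (a : A) l :
  (forall x, In x l -> x <> a -> p x = true -> f x <= g x) ->
  (forall x, In x l -> 0 <= g x) ->
  sumR f (remove dec a (filter p l)) <= sumR g (remove dec a l).
Proof.
  induction l as [|b l IH]; simpl; intros H1 H2; [lra|].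
  assert (IH' : sumR f (remove dec a (filter p l)) <= sumR g (remove dec a l))
    by (apply IH; intros; [apply H1|apply H2]; auto).
  destruct (p b) eqn:Hp; simpl; destruct (dec a b); simpl; auto.
  - pose proof (H1 b (or_introl eq_refl) (not_eq_sym n) Hp). lra.
  - pose proof (H2 b (or_introl eq_refl)). lra.
Qed.

Lemma sumR_remove_le {A} (f : A -> R) dec (a : A) l :
  NoDup l -> 0 <= f a ->
  sumR f l <= f a + sumR f (remove dec a l).
Proof.
  induction l as [|b l IH]; simpl; intros Hn H0; [lra|].
  inversion Hn; subst.
  destruct (dec a b).
  - subst. rewrite notin_remove by auto. lra.
  - simpl. specialize (IH H3 H0). lra.
Qed.

Lemma argmin_ex {A} (h : A -> R) (l : list A) :
  l <> nil -> exists m, In m l /\ forall y, In y l -> h m <= h y.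
Proof.
  induction l as [|a l IH]; intros Hne; [congruence|].
  destruct l as [|b l'].
  - exists a; split; [simpl; auto|]. intros y [<-|[]]; lra.
  - destruct IH as [m [Hm Hmin]]; [discriminate|].
    destruct (Rle_dec (h a) (h m)).
    + exists a; split; [simpl; auto|]. intros y [<-|Hy]; [lra|].
      specialize (Hmin y Hy); lra.
    + exists m; split; [simpl; auto|]. intros y [<-|Hy]; [lra|auto].
Qed.

Lemma dist_sym p q : Defs.dist p q = Defs.dist q p.
Proof. unfold Defs.dist. f_equal. ring. Qed.

Lemma dist_nonneg p q : 0 <= Defs.dist p q.
Proof. unfold Defs.dist. apply sqrt_pos. Qed.

Lemma dist_tri p q r : Defs.dist p r <= Defs.dist p q + Defs.dist q r.
Proof.
  unfold Defs.dist.
  set (a := fst p - fst q). set (b := snd p - snd q).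
  set (c := fst q - fst r). set (d := snd q - snd r).
  replace (fst p - fst r) with (a + c) by (unfold a, c; ring).
  replace (snd p - snd r) with (b + d) by (unfold b, d; ring).
  assert (Hu : 0 <= a^2 + b^2) by nra. assert (Hv : 0 <= c^2 + d^2) by nra.
  pose proof (sqrt_pos (a^2+b^2)) as U. pose proof (sqrt_pos (c^2+d^2)) as V.
  pose proof (sqrt_sqrt _ Hu) as U2. pose proof (sqrt_sqrt _ Hv) as V2.
  set (u := sqrt (a^2+b^2)) in *. set (v := sqrt (c^2+d^2)) in *.
  rewrite <- (sqrt_square (u + v)) by lra.
  apply sqrt_le_1_alt.
  assert (a*c + b*d <= u*v).
  { assert ((a*c+b*d)^2 <= (u*v)^2).
    { replace ((u*v)^2) with ((u*u)*(v*v)) by ring. rewrite U2, V2. pose proof (pow2_ge_0 (a*d-b*c)). nra. }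
    assert (0 <= u*v) by nra. nra. }
  nra.
Qed.

Lemma Rpower_pos x a : 0 < Rpower x a.
Proof. unfold Rpower. apply exp_pos. Qed.

Lemma Rpower_mult_distr a b c : 0 < a -> 0 < b -> Rpower (a*b) c = Rpower a c * Rpower b c.
Proof.
  intros. unfold Rpower. rewrite ln_mult by auto. rewrite <- exp_plus. f_equal. ring.
Qed.

Lemma div_nn a b : 0 <= a -> 0 < b -> 0 <= a / b.
Proof. intros. unfold Rdiv. apply Rmult_le_pos; [auto|left; apply Rinv_0_lt_compat; auto]. Qed.

Lemma gamma_le s b n eps : 0 < eps -> 0 < b -> 0 < n -> s >= (1+eps)*b*n ->
  0 <= b * s / (s - b * n) <= b * (1 + eps) / eps.
Proof.
  intros. assert (0 < eps*b*n) by (repeat apply Rmult_lt_0_compat; auto).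
  assert (Hp : 0 < s - b*n) by nra.
  assert (Ht := Rinv_0_lt_compat _ Hp). assert (Ht1 := Rinv_r _ (Rgt_not_eq _ _ Hp)).
  assert (He := Rinv_0_lt_compat _ H). assert (He1 := Rinv_r _ (Rgt_not_eq _ _ H)).
  unfold Rdiv. set (t := / (s - b*n)) in *. set (u := /eps) in *.
  assert (0 < b*n) by (apply Rmult_lt_0_compat; auto).
  assert (0 < s) by nra.
  split; [left; repeat apply Rmult_lt_0_compat; lra|].
  assert (Hq : s * eps <= (1+eps) * (s - b*n)) by nra.
  assert (Hq4 : s * eps * t * u <= (1+eps)*(s-b*n) * t * u).
  { apply Rmult_le_compat_r; [lra|]. apply Rmult_le_compat_r; [lra|]. auto. }
  replace (s * eps * t * u) with (s * t * (eps * u)) in Hq4 by ring.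
  replace ((1+eps)*(s-b*n) * t * u) with ((1+eps) * u * ((s-b*n)*t)) in Hq4 by ring.
  rewrite He1, Ht1 in Hq4. nra.
Qed.

Theorem lemma3 :
  forall alpha eps : R, 0 <= alpha -> 0 < eps ->
  exists C : R,
  forall (N beta : R) (Lall : list link) (i : nat) (L : list link) (e : link),
    0 < N -> 0 < beta ->
    (forall e0, In e0 Lall ->
       0 < d_len e0 /\ 0 < pw e0 /\ S alpha e0 / N >= (1 + eps) * beta) ->
    NoDup L ->
    (forall e', In e' L -> in_bucket alpha Lall i e') ->
    sinr_feasible alpha N beta L ->
    in_bucket alpha Lall i e ->
    sumR (fun e' => abar alpha N beta e' e) (L_ell e L) <= C.
Proof.
  intros alpha eps Ha He.
  set (K := 2 * Rpower 3 alpha * (1 + eps) / eps).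
  assert (HK : 0 <= K).
  { unfold K. pose proof (Rpower_pos 3 alpha).
    apply Rmult_le_pos; [|left; apply Rinv_0_lt_compat; lra]. nra. }
  exists (1 + K).
  intros N beta Lall i L e HN Hb Hall Hnd HL Hf Hbe.
  assert (R3pos : 0 < Rpower 3 alpha) by apply Rpower_pos.
  assert (Spos : forall y, In y Lall -> 0 < S alpha y).
  { intros y Hy. destruct (Hall y Hy) as [_ [Hp _]]. unfold S.
    apply Rdiv_lt_0_compat; [auto|apply Rpower_pos]. }
  assert (HeL : In e Lall) by (apply Hbe).
  assert (HSe := Spos e HeL).
  assert (HSeN : S alpha e >= (1 + eps) * beta * N).
  { destruct (Hall e HeL) as [_ [_ H]].
    assert (E1 : S alpha e = S alpha e / N * N) by (field; lra).
    rewrite E1. nra. }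
  assert (Hgam : 0 <= gamma alpha N beta e <= beta * (1 + eps) / eps).
  { unfold gamma. apply gamma_le; auto. }
  assert (Habar_nn : forall y, In y Lall -> 0 <= abar alpha N beta y e).
  { intros y Hy. unfold abar, a_aff, ahat. apply Rmin_glb; [lra|].
    apply Rmult_le_pos; [lra|]. apply div_nn; [|lra].
    unfold Sx. apply div_nn.
    2: apply Rpower_pos.
    left; apply Hall; auto. }
  assert (HLall : forall y, In y L -> In y Lall) by (intros y Hy; apply (HL y Hy)).
  assert (Hfin : forall y, In y (L_ell e L) -> In y L /\ d_len y <= d_cross y e).
  { intros y Hy. unfold L_ell in Hy. apply filter_In in Hy. destruct Hy as [Hy Hp].
    destruct (Rle_dec (d_len y) (d_cross y e)); [auto|discriminate]. }
  destruct (L_ell e L) as [|y0 l0] eqn:HLe.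
  { simpl. lra. }
  destruct (argmin_ex (fun y => d_cross y e) (y0 :: l0)) as [e2 [He2 Hmin]]; [discriminate|].
  rewrite <- HLe in He2, Hmin, Hfin |- *.
  destruct (Hfin e2 He2) as [He2L He2d].
  assert (HS2 := Spos e2 (HLall e2 He2L)).
  assert (HS2e : S alpha e2 <= 2 * S alpha e).
  { destruct (HL e2 He2L) as [_ [_ H1]]. destruct Hbe as [_ [H2 _]].
    simpl in H1. lra. }
  destruct (Hf e2 He2L) as [Hpos2 Hfeas2].
  set (g := fun y => (K * beta / S alpha e2) * Sx alpha y e2).
  assert (Hstep : sumR (fun e' => abar alpha N beta e' e) (L_ell e L)
     <= 1 + sumR g (remove link_eq_dec e2 L)).
  { eapply Rle_trans.
    - apply (sumR_remove_le _ link_eq_dec e2).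
      + unfold L_ell. apply NoDup_filter; auto.
      + apply Habar_nn; auto.
    - apply Rplus_le_compat; [unfold abar; apply Rmin_l|].
      apply sumR_remove_filter.
      + intros y HyL Hne Hp.
        assert (Hyd : d_len y <= d_cross y e).
        { destruct (Rle_dec (d_len y) (d_cross y e)); [auto|discriminate]. }
        assert (HyE : In y (L_ell e L)).
        { unfold L_ell. apply filter_In. split; auto. }
        assert (HyLall := HLall y HyL).
        destruct (Hall y HyLall) as [Hdy [Hpy _]].
        assert (Hd2 : 0 < d_cross y e2) by (apply Hpos2; auto).
        assert (HD'min := Hmin y HyE). simpl in HD'min.
        assert (Htri : d_cross y e2 <= 3 * d_cross y e).
        { unfold d_cross, d_len in *.
          pose proof (dist_tri (sdr y) (rcv e) (rcv e2)).
          pose proof (dist_tri (rcv e) (sdr e2) (rcv e2)).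
          rewrite (dist_sym (rcv e) (sdr e2)) in H0. lra. }
        assert (HSx : Sx alpha y e <= Rpower 3 alpha * Sx alpha y e2).
        { unfold Sx.
          assert (Hm : Rpower (d_cross y e2) alpha <= Rpower 3 alpha * Rpower (d_cross y e) alpha).
          { rewrite <- Rpower_mult_distr by lra. apply Rle_Rpower_l; [auto|lra]. }
          pose proof (Rpower_pos (d_cross y e2) alpha).
          pose proof (Rpower_pos (d_cross y e) alpha).
          unfold Rdiv.
          apply (Rmult_le_reg_r (Rpower (d_cross y e2) alpha * Rpower (d_cross y e) alpha)).
          { apply Rmult_lt_0_compat; auto. }
          replace (pw y * / Rpower (d_cross y e) alpha *
                   (Rpower (d_cross y e2) alpha * Rpower (d_cross y e) alpha))
            with (pw y * Rpower (d_cross y e2) alpha) by (field; lra).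
          replace (Rpower 3 alpha * (pw y * / Rpower (d_cross y e2) alpha) *
                   (Rpower (d_cross y e2) alpha * Rpower (d_cross y e) alpha))
            with (pw y * (Rpower 3 alpha * Rpower (d_cross y e) alpha)) by (field; lra).
          apply Rmult_le_compat_l; lra. }
        assert (Hsx2 : 0 <= Sx alpha y e2).
        { unfold Sx. apply div_nn; [lra|apply Rpower_pos]. }
        assert (Hsx : 0 <= Sx alpha y e).
        { unfold Sx. apply div_nn; [lra|apply Rpower_pos]. }
        eapply Rle_trans; [unfold abar; apply Rmin_r|].
        unfold a_aff, ahat, g, K. unfold Rdiv.
        assert (Hie := Rinv_0_lt_compat _ HSe). assert (Hie1 := Rinv_r _ (Rgt_not_eq _ _ HSe)).
        assert (Hi2 := Rinv_0_lt_compat _ HS2). assert (Hi21 := Rinv_r _ (Rgt_not_eq _ _ HS2)).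
        assert (Hue := Rinv_0_lt_compat _ He).
        destruct Hgam as [Hg0 Hg1]. unfold Rdiv in Hg1.
        set (ie := / S alpha e) in *. set (i2 := / S alpha e2) in *. set (ue := / eps) in *.
        set (gm := gamma alpha N beta e) in *.
        set (sx := Sx alpha y e) in *. set (sx2 := Sx alpha y e2) in *.
        set (r3 := Rpower 3 alpha) in *.
        assert (Hiei2 : ie <= 2 * i2).
        { replace ie with (ie * (S alpha e2 * i2)) by (rewrite Hi21; ring).
          replace (2 * i2) with (ie * (2 * S alpha e * i2)) by
            (replace (ie * (2 * S alpha e * i2)) with (2 * i2 * (S alpha e * ie)) by ring;
             rewrite Hie1; ring).
          apply Rmult_le_compat_l; [lra|]. apply Rmult_le_compat_r; lra. }
        assert (H1 : sx * ie <= r3 * sx2 * (2 * i2)).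
        { apply Rmult_le_compat; lra. }
        assert (H2 : gm * (sx * ie) <= beta * (1 + eps) * ue * (r3 * sx2 * (2 * i2))).
        { apply Rmult_le_compat; try lra. apply Rmult_le_pos; lra. }
        replace (2 * r3 * (1 + eps) * ue * beta * i2 * sx2)
          with (beta * (1 + eps) * ue * (r3 * sx2 * (2 * i2))) by ring.
        exact H2.
      + intros y Hy. unfold g. apply Rmult_le_pos.
        * apply div_nn; [|auto]. apply Rmult_le_pos; lra.
        * unfold Sx. apply div_nn; [|apply Rpower_pos].
          left; apply Hall; auto. }
  enough (sumR g (remove link_eq_dec e2 L) <= K) by lra.
  unfold g. rewrite sumR_scale.
  set (Sg := sumR (fun y => Sx alpha y e2) (remove link_eq_dec e2 L)) in *.
  assert (HSg : 0 <= Sg).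
  { apply sumR_nonneg. intros y Hy. apply in_remove in Hy. destruct Hy as [Hy _].
    unfold Sx. apply div_nn; [|apply Rpower_pos]. left; apply Hall; auto. }
  assert (Hden : 0 < N + Sg) by lra.
  assert (HbS : beta * (N + Sg) <= S alpha e2).
  { apply Rge_le in Hfeas2.
    assert (E1 : S alpha e2 = S alpha e2 / (N + Sg) * (N + Sg)) by (field; lra).
    rewrite E1. apply Rmult_le_compat_r; lra. }
  assert (Hc := Rinv_0_lt_compat _ HS2). assert (Hc1 := Rinv_r _ (Rgt_not_eq _ _ HS2)).
  unfold Rdiv. set (c := / S alpha e2) in *.
  assert (beta * Sg * c <= S alpha e2 * c) by (apply Rmult_le_compat_r; nra).
  rewrite Hc1 in H. nra.
Qed.
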